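(* Let $n\ge 1$ and let $T$ be a tree chosen uniformly at random among all labeled trees on the vertex set $\{1,\dots,n\}$. For a tree with vertex degrees $k_1,\dots,k_n$, let $\langle k^2\rangle=\frac{1}{n}\sum_{i=1}^n k_i^2$ and $E_0[C]=\frac{n}{6}\left(n-1-\langle k^2\rangle\right)$. Then \[ E\big[E_0[C]\big]=\frac{1}{6}(n-1)\left(n-5+\frac{6}{n}\right)=\frac{n^2}{6}-n+\frac{11}{6}-\frac{1}{n}, \] where the outer expectation is over the uniformly random labeled tree $T$.
   Context: For a tree on $n$ vertices, $E_0[C]=\frac{n}{6}(n-1-\langle k^2\rangle)$ is the expected number of pairs of edges that cross when the vertices are placed at positions $1,\dots,n$ by a uniformly random permutation (two edges $\{s,t\}$, $\{u,v\}$ cross iff exactly one of the positions of $s,t$ lies strictly between the positions of $u$ and $v$, the other lying strictly outside that interval). *)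

(* Defs.v *)
From HB Require Import structures.
From mathcomp Require Import all_boot all_order all_algebra.
Set Implicit Arguments. Unset Strict Implicit. Unset Printing Implicit Defensive.
Import Order.TTheory GRing.Theory Num.Theory.

(* A simple graph on the vertex set 'I_n (vertices 1..n of the paper are
   0..n-1 here) is a set of edges, each edge a 2-element set of vertices. *)
Definition simple_graph (n : nat) (E : {set {set 'I_n}}) : bool :=
  [forall e in E, #|e| == 2].

Definition adj (n : nat) (E : {set {set 'I_n}}) : rel 'I_n :=
  fun x y => (x != y) && ([set x; y] \in E).

Definition connected (n : nat) (E : {set {set 'I_n}}) : bool :=
  [forall x, forall y, connect (adj E) x y].

(* A cycle: a closed walk x, p_1, ..., p_k, x with k >= 2 and all of
   x, p_1, ..., p_k pairwise distinct.  Since the vertices are distinct,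
   k < n, so quantifying over k : 'I_n loses nothing. *)
Definition has_cycle (n : nat) (E : {set {set 'I_n}}) : bool :=
  [exists x : 'I_n, exists k : 'I_n, exists p : k.-tuple 'I_n,
    [&& 2 <= size p, path (adj E) x p, uniq (x :: p) & adj E (last x p) x]].

Definition is_tree (n : nat) (E : {set {set 'I_n}}) : bool :=
  [&& simple_graph E, connected E & ~~ has_cycle E].

Definition labeled_trees (n : nat) : {set {set {set 'I_n}}} :=
  [set E | is_tree E].

Local Open Scope ring_scope.

Definition degree (n : nat) (E : {set {set 'I_n}}) (i : 'I_n) : nat :=
  #|[set e in E | i \in e]|.

Definition mean_sq_degree (n : nat) (E : {set {set 'I_n}}) : rat :=
  (\sum_(i < n) ((degree E i) ^ 2)%:R) / n%:R.

Definition E0C (n : nat) (E : {set {set 'I_n}}) : rat :=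
  n%:R / 6%:R * (n%:R - 1 - mean_sq_degree E).

Definition expected_E0C (n : nat) : rat :=
  (\sum_(E in labeled_trees n) E0C E) / #|labeled_trees n|%:R.

(* Main.v *)
Require Import Defs.
From mathcomp Require Import all_boot all_order all_algebra.
From mathcomp Require Import zify ring lra.
Import GRing.Theory Num.Theory.
Set Implicit Arguments. Unset Strict Implicit. Unset Printing Implicit Defensive.

Definition inS N (S : {set 'I_N}) (E : {set {set 'I_N}}) :=
  forall e, e \in E -> exists x y, [/\ x != y, x \in S, y \in S & e = [set x; y]].
Definition noCyc N (E : {set {set 'I_N}}) :=
  forall c : seq 'I_N, uniq c -> (2 < size c)%N -> ~~ cycle (adj E) c.
Definition tree_on N (S : {set 'I_N}) E :=
  [/\ inS S E, (forall x y, x \in S -> y \in S -> connect (adj E) x y) & noCyc E].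

Lemma adjC N (E : {set {set 'I_N}}) x y : adj E x y = adj E y x.
Proof. by rewrite /adj eq_sym setUC. Qed.

Lemma adj_in N S (E : {set {set 'I_N}}) x y : inS S E -> adj E x y -> (x \in S) && (y \in S).
Proof.
move=> hS /andP[_ /hS [a [b [_ aS bS e]]]].
have: x \in [set x; y] by rewrite !inE eqxx.
have: y \in [set x; y] by rewrite !inE eqxx orbT.
by rewrite e !inE => /orP[] /eqP-> /orP[] /eqP->; rewrite ?aS ?bS.
Qed.

Lemma set2_eq1 N (l a v : 'I_N) : l != a -> [set l; a] = [set l; v] -> a = v.
Proof.
move=> la e; have: a \in [set l; v] by rewrite -e !inE eqxx orbT.
by rewrite !inE eq_sym (negbTE la) => /eqP.
Qed.

Lemma edge_other N (e : {set 'I_N}) x a b : a != b -> e = [set a; b] -> x \in e ->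
  exists u, x != u /\ e = [set x; u].
Proof.
move=> ab -> ; rewrite !inE => /orP[] /eqP->.
  by exists b.
by exists a; split; [rewrite eq_sym | rewrite setUC].
Qed.

Lemma degree_add N (E : {set {set 'I_N}}) f i : f \notin E ->
  degree (f |: E) i = (degree E i + (i \in f))%N.
Proof.
move=> fE; rewrite /degree.
case: (boolP (i \in f)) => hi.
  have ->: [set e in f |: E | i \in e] = f |: [set e in E | i \in e].
    by apply/setP => e; rewrite !inE; case: (e =P f) => [->|_]; rewrite ?hi ?orbT ?orbF //=.
  by rewrite cardsU1 inE (negbTE fE) addnC.
have ->: [set e in f |: E | i \in e] = [set e in E | i \in e].
  by apply/setP => e; rewrite !inE; case: (e =P f) => [->|_]; rewrite ?(negbTE hi) ?andbF //=.
by rewrite addn0.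
Qed.

Lemma degree1_uniq N (E : {set {set 'I_N}}) l e1 e2 : degree E l = 1%N ->
  e1 \in E -> l \in e1 -> e2 \in E -> l \in e2 -> e1 = e2.
Proof.
rewrite /degree => /eqP/cards1P [e0 h] h1 l1 h2 l2.
have: e1 \in [set e in E | l \in e] by rewrite inE h1 l1.
have: e2 \in [set e in E | l \in e] by rewrite inE h2 l2.
by rewrite h !inE => /eqP-> /eqP->.
Qed.

Lemma degree_out N S (E : {set {set 'I_N}}) i : inS S E -> i \notin S -> degree E i = 0%N.
Proof.
move=> hS iS; apply/eqP; rewrite cards_eq0; apply/eqP/setP => e; rewrite !inE.
apply/negbTE; apply/negP => /andP[/hS [a [b [_ aS bS ->]]]].
by rewrite !inE => /orP[] /eqP ei; move: iS; rewrite ei ?aS ?bS.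
Qed.
Lemma hasCycP N (E : {set {set 'I_N}}) : ~~ has_cycle E <-> noCyc E.
Proof.
split.
  move=> hc [|x p] // u sz; apply/negP => cy; move/negP: hc; apply.
  have hk : (size p < N)%N.
    have := card_uniqP u; have := max_card (mem (x :: p)); rewrite card_ord /= => h1 h2.
    by move: h1; rewrite h2.
  apply/existsP; exists x; apply/existsP; exists (Ordinal hk); apply/existsP.
  exists (in_tuple p); move: cy; rewrite /= rcons_path => /andP[h1 h2].
  by apply/and4P; split.
move=> hn; apply/negP => /existsP [x /existsP [k /existsP [p /and4P [h1 h2 h3 h4]]]].
by move: (hn (x :: tval p) h3); rewrite /= ltnS h1 rcons_path h2 h4 => /(_ isT).
Qed.

Lemma tree_top N (E : {set {set 'I_N}}) : is_tree E <-> tree_on setT E.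
Proof.
rewrite /is_tree /tree_on; split.
  move=> /and3P [hs hc hy]; split.
  - move=> e eE; move/forallP: hs => /(_ e); rewrite eE /= => /cards2P [x [y [xy ->]]].
    by exists x, y; rewrite !inE.
  - by move=> x y _ _; move/forallP: hc => /(_ x) /forallP /(_ y).
  - by apply/hasCycP.
move=> [hs hc hy]; apply/and3P; split.
- apply/forallP => e; apply/implyP => /hs [x [y [xy _ _ ->]]].
  by apply/cards2P; exists x, y.
- by apply/forallP => x; apply/forallP => y; apply: hc; rewrite inE.
- by apply/hasCycP.
Qed.
Lemma adj_sub N (E1 E2 : {set {set 'I_N}}) : E1 \subset E2 -> subrel (adj E1) (adj E2).
Proof. by move=> s x y /andP[xy h]; rewrite /adj xy (subsetP s _ h). Qed.

Lemma tree_add N (S : {set 'I_N}) E l v : l \in S -> v \in S -> v != l ->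
  tree_on (S :\ l) E -> tree_on S ([set l; v] |: E).
Proof.
move=> lS vS vl [hs hc hy].
set E' := _ |: E.
have sub : subrel (adj E) (adj E') by apply: adj_sub; apply: subsetUr.
have lv : adj E' l v by rewrite /adj eq_sym vl setU11.
have vl' : adj E' v l by rewrite adjC.
have vS' : v \in S :\ l by rewrite !inE vl vS.
have nbr : forall z, adj E' l z -> z = v.
  move=> z /andP[lz]; rewrite in_setU1 => /orP[/eqP|] h; first exact: (set2_eq1 lz h).
  have : adj E l z by rewrite /adj lz h.
  by move/(adj_in hs); rewrite !inE eqxx.
split.
- move=> e; rewrite in_setU1 => /orP[/eqP->|/hs [x [y [xy xS yS ->]]]].
    by exists l, v; rewrite lS vS eq_sym vl.
  by exists x, y; move: xS yS; rewrite !inE => /andP[_ ->] /andP[_ ->].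
- have mono : forall x y, x \in S :\ l -> y \in S :\ l -> connect (adj E') x y.
    by move=> x y xS yS; apply: (connect_sub _ (hc x y xS yS)) => a b ab; apply: connect1; apply: sub.
  move=> x y xS yS.
  case: (x =P l) => [->|/eqP xl]; case: (y =P l) => [->|/eqP yl] //.
  + apply: connect_trans (connect1 lv) (mono _ _ vS' _); by rewrite !inE yl.
  + apply: connect_trans (mono _ _ _ vS') (connect1 vl'); by rewrite !inE xl.
  + by apply: mono; rewrite !inE ?xl ?yl.
- move=> c u sz; apply/negP => cy.
  case: (boolP (l \in c)) => lc.
    case/splitPr: lc u sz cy => p1 p2 u sz cy.
    rewrite -(rot_cycle (size p1)) rot_size_cat in cy.
    rewrite -(rot_uniq (size p1)) rot_size_cat in u.
    rewrite size_cat /= in sz.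
    have sz' : (1 < size (p2 ++ p1))%N. by rewrite size_cat addnC; rewrite addnS ltnS in sz.
    move: cy u sz'; rewrite cat_cons; case: (p2 ++ p1) => [|a [|b q]] // cy u _.
    move: cy u => /= /and3P[/nbr av _]; rewrite rcons_path => /andP[_ la] /and4P[_ aq _ _].
    move: la; rewrite adjC => /nbr lv'.
    by move: aq; rewrite av -lv' mem_last.
  have: cycle (adj E) c.
    apply: (@sub_in_cycle _ [pred z | z != l] (adj E')) cy; last first.
      by apply/allP => z zc /=; apply/eqP => zl; move: lc; rewrite -zl zc.
    move=> x y /= xl yl /andP[xy]; rewrite in_setU1 => /orP[/eqP h|h]; last by rewrite /adj xy h.
    have: l \in [set x; y] by rewrite h !inE eqxx.
    by rewrite !inE => /orP[] /eqP h'; [move: xl | move: yl]; rewrite inE -h' eqxx.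
  by apply/negP; apply: hy.
Qed.
Lemma tree_del N (S : {set 'I_N}) E l v : tree_on S E -> degree E l = 1%N ->
  [set l; v] \in E -> l != v -> tree_on (S :\ l) (E :\ [set l; v]).
Proof.
move=> [hs hc hy] dl fE lv.
set f := [set l; v].
have lf : l \in f by rewrite !inE eqxx.
have nb : forall z, adj E l z -> z = v.
  move=> z /andP[lz h]; apply: (set2_eq1 lz).
  by apply: (degree1_uniq dl h _ fE lf); rewrite !inE eqxx.
have nf : forall x y, x != l -> y != l -> [set x; y] != f.
  move=> x y xl yl; apply/eqP => h; move: lf; rewrite -h !inE.
  by case/orP => /eqP h'; [move: xl | move: yl]; rewrite h' eqxx.
split.
- move=> e; rewrite !inE => /andP[ef eE].
  have [x [y [xy xS yS ee]]] := hs e eE.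
  have nl : forall z, z \in e -> z != l.
    move=> z ze; apply/eqP => zl; move: ef; rewrite (degree1_uniq dl eE _ fE lf) ?eqxx //.
    by rewrite -zl.
  exists x, y; rewrite !inE xS yS xy ee; split => //; rewrite ?andbT; apply: nl; rewrite ee !inE eqxx ?orbT //.
- move=> x y; rewrite !inE => /andP[xl xS] /andP[yl yS].
  case/connectP: (hc x y xS yS) => p pp ey.
  rewrite ey in yl *; move: yl; case: (shortenP pp) => p' pp' u' _ yl.
  case: (boolP (l \in p')) => lp.
    case/splitPr: lp pp' u' yl => p1 p2 pp' u' yl.
    case: p2 pp' u' yl => [|b q] pp' u' yl; first by rewrite last_cat /= eqxx in yl.
    move: pp'; rewrite cat_path => /andP[_] /= /and3P[a1 /nb lb _].
    move: a1; rewrite adjC => /nb a1.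
    move: u'; rewrite -cat_cons cat_uniq => /and3P[_ /hasPn h _].
    by move: (h b); rewrite !inE eqxx orbT => /(_ isT); rewrite lb -a1 -in_cons mem_last.
  apply/connectP; exists p' => //.
  apply: (@sub_in_path _ [pred z | z != l] (adj E)) pp'; last first.
    apply/allP => z; rewrite inE => /orP[/eqP->//|zp /=].
    by apply/eqP => zl; move: lp; rewrite -zl zp.
  move=> a b; rewrite !inE => al bl /andP[ab h]; rewrite /adj ab !inE h andbT.
  exact: nf.
- move=> c u sz; apply/negP => cy.
  have: cycle (adj E) c.
    by apply: (sub_cycle _ cy); apply: adj_sub; apply: subsetDl.
  by apply/negP; apply: hy.
Qed.
Lemma leaf_step N S (E : {set {set 'I_N}}) x h r : tree_on S E ->
  path (adj E) x (h :: r) -> uniq (x :: h :: r) ->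
  (degree E x = 1%N) \/ exists u, path (adj E) u (x :: h :: r) /\ uniq (u :: x :: h :: r).
Proof.
move=> [hs hc hy] pp uu.
case: (eqVneq (degree E x) 1%N) => dx; first by left.
right.
have xh : adj E x h by move: pp => /andP[].
set A := [set e in E | x \in e].
have fA : [set x; h] \in A by rewrite inE; case/andP: xh => _ ->; rewrite !inE eqxx.
have : (0 < #|A :\ [set x; h]|)%N.
  by move: dx; rewrite /degree -/A (cardsD1 [set x; h] A) fA /= add1n eqSS lt0n.
case/card_gt0P => e; rewrite !inE => /andP[ne /andP[eE xe]].
have [a [b [ab _ _ ee]]] := hs e eE.
have [w [xw ew]] := edge_other ab ee xe.
have xw' : adj E x w by rewrite /adj xw -ew.
have wh : w != h by apply: contraNneq ne => wh; rewrite ew wh.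
case: (boolP (w \in x :: h :: r)) => wp; last first.
  exists w; split; [apply/andP; split => //; by rewrite adjC | by rewrite cons_uniq wp uu].
exfalso; move: wp; rewrite !inE (negbTE wh) eq_sym (negbTE xw) /= => wr.
case/splitPr: wr pp uu => r1 r2 pp uu.
have: cycle (adj E) (x :: h :: rcons r1 w); last first.
  apply/negP; apply: hy; last by rewrite /= size_rcons.
  by move: uu; rewrite -cat_rcons -!cat_cons cat_uniq => /andP[].
rewrite /= rcons_path last_rcons [adj E w x]adjC xw' !andbT xh /=.
by move: pp; rewrite -cat_rcons -cat_cons cat_path => /andP[] /andP[].
Qed.

Lemma leaf_exists N S (E : {set {set 'I_N}}) : tree_on S E -> (1 < #|S|)%N ->
  exists l, (l \in S) /\ degree E l = 1%N.
Proof.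
move=> ht sz; have [hs hc hy] := ht.
have [a aS] : exists a, a \in S by apply/set0Pn; rewrite -card_gt0; apply: ltnW.
have [b bS ba] : exists2 b, b \in S & b != a.
  have: (0 < #|S :\ a|)%N by rewrite (cardsD1 a S) aS in sz.
  by case/card_gt0P => b; rewrite !inE => /andP[]; exists b.
case/connectP: (hc a b aS bS) => p pp ep.
move: ba; rewrite ep; case: (shortenP pp) => p' pp' u' _ ba.
case: p' pp' u' ba => [|h r] pp' u' ba; first by rewrite eqxx in ba.
have main : forall d x h r, path (adj E) x (h :: r) -> uniq (x :: h :: r) ->
    (N <= size r + d)%N -> exists l, (l \in S) /\ degree E l = 1%N.
  elim=> [|d IH] x h0 r0 pr ur.
    rewrite addn0 => sr; exfalso.
    have := card_uniqP ur; have := max_card (mem (x :: h0 :: r0)).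
    rewrite card_ord /= => h1 h2; move: h1; rewrite h2 /=; lia.
  move=> sr; case: (leaf_step ht pr ur) => [dx|[w [pw uw]]].
    exists x; split => //.
    by case/andP: pr => /(adj_in hs) /andP[].
  by apply: (IH w x (h0 :: r0) pw uw); rewrite /=; lia.
by apply: (main N a h r pp' u'); lia.
Qed.
Fixpoint decode N (S : {set 'I_N}) (s : seq 'I_N) : {set {set 'I_N}} :=
  match s with
  | [::] => [set S]
  | v :: s' => match [pick l in [set i in S | i \notin s]] with
     | Some l => [set l; v] |: decode (S :\ l) s'
     | None => set0 end
  end.

Lemma cand_card N (S : {set 'I_N}) (s : seq 'I_N) :
  (#|S| <= #|[set i in S | i \notin s]| + size s)%N.
Proof.
rewrite -(cardsID [set i | i \in s] S) addnC.
have ->: S :\: [set i | i \in s] = [set i in S | i \notin s].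
  by apply/setP => i; rewrite !inE andbC.
rewrite leq_add2l.
apply: leq_trans (card_size s); apply: subset_leq_card.
by apply/subsetP => i; rewrite !inE => /andP[_].
Qed.

Lemma path_in N S (E : {set {set 'I_N}}) x p : inS S E -> path (adj E) x p -> all (mem S) p.
Proof.
move=> hs; elim: p x => [|y p IH] x //= /andP[xy pp].
by rewrite (IH _ pp) andbT; case/andP: (adj_in hs xy).
Qed.

Lemma noCyc_small N S (E : {set {set 'I_N}}) : inS S E -> (#|S| <= 2)%N -> noCyc E.
Proof.
move=> hs sS [|z q] // u sz; apply/negP => /= cy.
have := path_in hs cy; rewrite all_rcons => /andP[zS qS].
have: (size (z :: q) <= #|S|)%N.
  rewrite -(card_uniqP u); apply: subset_leq_card; apply/subsetP => w.
  rewrite inE => /orP[/eqP->//|]; exact: (allP qS).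
move: sz sS; lia.
Qed.

Lemma decodeA m : forall N (S : {set 'I_N}) s, #|S| = m.+2 -> size s = m -> all (mem S) s ->
  tree_on S (decode S s) /\ forall i, i \in S -> degree (decode S s) i = (count_mem i s).+1.
Proof.
elim: m => [|m IH] N S s cS.
  case: s => // _ _ /=.
  have /cards2P [a [b [ab eS]]] : #|S| == 2 by rewrite cS.
  have hs : inS S [set S] by move=> e; rewrite inE => /eqP ->; exists a, b; rewrite eS !inE !eqxx orbT.
  split; [split => // | ].
  - move=> x y; rewrite eS !inE => hx hy.
    case: (eqVneq x y) => [->|xy]; first exact: connect0.
    apply: connect1; rewrite /adj xy inE.
    by move: hx hy xy; case/orP => /eqP-> /orP[] /eqP->; rewrite ?eqxx // setUC ?eqxx.
  - by apply: (noCyc_small hs); rewrite cS.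
  - move=> i iS; rewrite /degree.
    have ->: [set e in [set S] | i \in e] = [set S].
      by apply/setP => e; rewrite !inE; case: (e =P S) => [->|]; rewrite ?iS.
    by rewrite cards1.
case: s => // v s' [sz] /= /andP[vS s'S].
case: pickP => [l|]; last first.
  move=> h; have := cand_card S (v :: s'); rewrite cS /= sz.
  by rewrite (eq_card0 h) => H; exfalso; lia.
rewrite !inE => /andP[lS]; rewrite negb_or => /andP[lv ls'].
have cS' : #|S :\ l| = m.+2 by move: cS; rewrite (cardsD1 l S) lS add1n => -[].
have s'S' : all (mem (S :\ l)) s'.
  apply/allP => w ws; have := allP s'S w ws; rewrite !inE => ->; rewrite andbT.
  by apply: contraNneq ls' => <-.
have [ht hd] := IH N (S :\ l) s' cS' sz s'S'.
have vl : v != l by rewrite eq_sym.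
split; first exact: tree_add.
have fT : [set l; v] \notin decode (S :\ l) s'.
  apply/negP => h; have: adj (decode (S :\ l) s') l v by rewrite /adj eq_sym vl h.
  by case: ht => hs _ _ /(adj_in hs); rewrite !inE eqxx.
move=> i iS; rewrite degree_add //.
case: (eqVneq i l) => [->|il].
  case: ht => hs _ _; rewrite (degree_out hs) ?(negbTE lv) ?inE ?eqxx //=.
  by rewrite (negbTE vl); move/count_memPn: ls' => ->.
have iS' : i \in S :\ l by rewrite !inE il iS.
rewrite hd // !inE (negbTE il) /= eq_sym.
by case: (v == i); rewrite /= ?addn1 ?addn0 ?add0n ?add1n.
Qed.
Lemma notin_inS N S' (T : {set {set 'I_N}}) l v : inS S' T -> l \notin S' -> [set l; v] \notin T.
Proof.
move=> hs lS; apply/negP => /hs [x [y [_ xS yS e]]].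
have: l \in [set x; y] by rewrite -e !inE eqxx.
by rewrite !inE => /orP[] /eqP h; move: lS; rewrite h ?xS ?yS.
Qed.

Lemma decode_step N (S : {set 'I_N}) v s' m : #|S| = m.+3 -> size s' = m -> all (mem S) (v :: s') ->
  exists l, [/\ [pick x in [set i in S | i \notin v :: s']] = Some l, l \in S, l \notin v :: s',
     #|S :\ l| = m.+2 & all (mem (S :\ l)) s'].
Proof.
move=> cS sz /= /andP[vS s'S].
case: pickP => [l|]; last first.
  move=> h; have := cand_card S (v :: s'); rewrite cS /= sz.
  by rewrite (eq_card0 h) => H; exfalso; lia.
rewrite !inE => /andP[lS ls]; exists l; split => //.
  by move: cS; rewrite (cardsD1 l S) lS add1n => -[].
apply/allP => w ws; have := allP s'S w ws; rewrite !inE => ->; rewrite andbT.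
by apply: contraNneq ls => <-; rewrite ?inE ws orbT.
Qed.

Lemma decodeB m : forall N (S : {set 'I_N}) s1 s2, #|S| = m.+2 -> size s1 = m -> size s2 = m ->
  all (mem S) s1 -> all (mem S) s2 -> decode S s1 = decode S s2 -> s1 = s2.
Proof.
elim: m => [|m IH] N S s1 s2 cS.
  by case: s1 => //; case: s2.
case: s1 => // v1 t1; case: s2 => // v2 t2 [sz1] [sz2] a1 a2 e.
have [_ d1] := decodeA cS (f_equal succn sz1 : size (v1 :: t1) = m.+1) a1.
have [_ d2] := decodeA cS (f_equal succn sz2 : size (v2 :: t2) = m.+1) a2.
have eC : [set i in S | i \notin v1 :: t1] = [set i in S | i \notin v2 :: t2].
  apply/setP => i; rewrite [LHS]inE [RHS]inE; case: (boolP (i \in S)) => iS; rewrite ?andbF ?andbT //.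
  have := d1 i iS; rewrite e d2 // => -[] h.
  apply/idP/idP => /count_memPn hh; apply/count_memPn; move: hh h => /=; congruence.
have [l [p1 lS l1 cS' s1S]] := decode_step cS sz1 a1.
have [l' [p2 _ l2 _ s2S]] := decode_step cS sz2 a2.
move: p2; rewrite -eC p1 => -[] ll; subst l'.
move: e; rewrite /= -eC p1 => e.
have [[hs1 _ _] _] := decodeA cS' sz1 s1S.
have [[hs2 _ _] _] := decodeA cS' sz2 s2S.
have lS' : l \notin S :\ l by rewrite !inE eqxx.
have f1 := notin_inS v1 hs1 lS'.
have f2 := notin_inS v2 hs2 lS'.
move: l1 l2; rewrite !inE !negb_or => /andP[lv1 _] /andP[lv2 _].
have dl : degree ([set l; v1] |: decode (S :\ l) t1) l = 1%N.
  by rewrite degree_add // (degree_out hs1 lS') !inE eqxx.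
have vv : v1 = v2.
  apply: (set2_eq1 lv1); apply: (degree1_uniq dl); rewrite ?in_setU1 ?eqxx ?inE //.
  by rewrite -in_setU1 e in_setU1 eqxx.
subst v2; congr (_ :: _).
apply: (IH N (S :\ l)) => //.
by rewrite -(setU1K f1) -(setU1K f2) e.
Qed.
Lemma pair2 N (a b x y : 'I_N) : x \in [set a; b] -> y \in [set a; b] -> x != y ->
  [set x; y] = [set a; b].
Proof.
by rewrite !inE => /orP[] /eqP-> /orP[] /eqP->; rewrite ?eqxx // setUC.
Qed.

Lemma decodeC m : forall N (S : {set 'I_N}) T, #|S| = m.+2 -> tree_on S T ->
  exists s, [/\ size s = m, all (mem S) s & T = decode S s].
Proof.
elim: m => [|m IH] N S T cS ht.
  exists [::]; split => //=.
  have /cards2P [a [b [ab eS]]] : #|S| == 2 by rewrite cS.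
  case: ht => hs hc _.
  have sub : forall e, e \in T -> e = S.
    move=> e /hs [x [y [xy xS yS ->]]]; rewrite eS; apply: pair2 => //; by rewrite -eS.
  have aS : a \in S by rewrite eS !inE eqxx.
  have bS : b \in S by rewrite eS !inE eqxx orbT.
  case/connectP: (hc a b aS bS) => [[|h p]] pp ep; first by rewrite ep eqxx in ab.
  case/andP: pp => /andP[_ hT] _.
  apply/setP => e; rewrite inE; apply/idP/eqP => [/sub //|->].
  by rewrite -(sub _ hT).
have [hs hc hy] := ht.
have [l0 [l0S dl0]] : exists l, l \in S /\ degree T l = 1%N.
  by apply: (leaf_exists ht); rewrite cS.
set L := [set i in S | degree T i == 1%N].
case hp: [pick x in L] => [l|]; last first.
  by move: hp; case: pickP => // h _; move: (h l0); rewrite !inE l0S dl0 eqxx.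
have : l \in L by move: hp; case: pickP => // x xL [<-].
rewrite !inE => /andP[lS /eqP dl].
have [e0 he0] : exists e0, e0 \in [set e in T | l \in e].
  by apply/card_gt0P; move: dl; rewrite /degree => ->.
move: he0; rewrite inE => /andP[e0T le0].
have [a [b [ab _ _ ee]]] := hs e0 e0T.
have [v [lv ev]] := edge_other ab ee le0.
rewrite ev in e0T; clear ev ee a b ab le0.
have vS : v \in S.
  have : adj T l v by rewrite /adj lv e0T.
  by case/(adj_in hs)/andP.
have ht' := tree_del ht dl e0T lv.
have cS' : #|S :\ l| = m.+2 by move: cS; rewrite (cardsD1 l S) lS add1n => -[].
have [s' [sz s'S eT]] := IH N (S :\ l) _ cS' ht'.
have [_ d'] := decodeA cS' sz s'S.
have lS' : l \notin S :\ l by rewrite !inE eqxx.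
have ls' : l \notin s'.
  by apply/negP => /(allP s'S); rewrite inE !inE eqxx.
exists (v :: s'); split => //=.
  by rewrite sz.
  rewrite vS /=; apply/allP => w /(allP s'S); rewrite !inE => /andP[_ ->] //.
have fT' : [set l; v] \notin T :\ [set l; v] by rewrite !inE eqxx.
have eT' : T = [set l; v] |: (T :\ [set l; v]) by rewrite setD1K.
have eC : [set i in S | i \notin v :: s'] = L.
  apply/setP => i; rewrite [LHS]inE [RHS]inE; case: (boolP (i \in S)) => iS; rewrite ?andbF ?andbT //.
  rewrite eT' degree_add //.
  case: (eqVneq i l) => [->|il].
    case: ht' => hs' _ _; rewrite (degree_out hs' lS') !inE eqxx /=.
    by rewrite (negbTE lv) (negbTE ls').
  have iS' : i \in S :\ l by rewrite !inE il iS.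
  rewrite eT d' // !inE (negbTE il) /=.
  case: (eqVneq i v) => [->|iv] /=; first by rewrite addn1.
  by rewrite addn0 eqSS; apply/(sameP count_memPn eqP).
rewrite eC hp -eT.
by rewrite {1}eT'.
Qed.
Lemma sum_tuple_cons (T : finType) k (F : k.+1.-tuple T -> nat) :
  (\sum_(t : k.+1.-tuple T) F t = \sum_(x : T) \sum_(t : k.-tuple T) F [tuple of x :: t])%N.
Proof.
rewrite pair_big /=.
rewrite (reindex (fun p : T * k.-tuple T => [tuple of p.1 :: p.2])) //=.
exists (fun t => (thead t, behead_tuple t)) => [[x t]|t] _ /=.
  by congr pair; apply: val_inj.
by rewrite [t in RHS]tuple_eta.
Qed.

Lemma sum_count (T : finType) (s : seq T) : (\sum_(i : T) count_mem i s = size s)%N.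
Proof.
elim: s => [|a s IH] /=; first by rewrite big1.
rewrite big_split /= IH (bigD1 a) //= eqxx big1 ?add1n //.
by move=> i /negbTE; rewrite eq_sym => ->.
Qed.

Lemma sumsq k n : (n * \sum_(t : k.-tuple 'I_n) \sum_(i < n) (count_mem i t).+1 ^ 2 =
   n ^ k * (n * (n + 3 * k) + k * (k - 1)))%N.
Proof.
elim: k => [|k IH].
  rewrite (eq_bigr (fun _ => n)); last first.
    move=> t _; rewrite tuple0 /= (eq_bigr (fun _ => 1%N)) //.
    by rewrite sum1_card card_ord.
  rewrite sum_nat_const card_tuple card_ord expn0; lia.
rewrite sum_tuple_cons.
have step : forall (x : 'I_n) (t : k.-tuple 'I_n),
    (\sum_(i < n) (count_mem i [tuple of x :: t]).+1 ^ 2 =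
     \sum_(i < n) (count_mem i t).+1 ^ 2 + 2 * count_mem x t + 3)%N.
  move=> x t; rewrite /= (bigD1 x) //= [in RHS](bigD1 x) //= eqxx.
  rewrite (eq_bigr (fun i => (count_mem i t).+1 ^ 2)); last first.
    by move=> i /negbTE; rewrite eq_sym => ->.
  set A := \sum_(i < n | _) _; set c := count_mem x t; rewrite add1n.
  lia.
rewrite (eq_bigr (fun x => \sum_(t : k.-tuple 'I_n) (\sum_(i < n) (count_mem i t).+1 ^ 2 + 2 * count_mem x t + 3)))%N; last first.
  by move=> x _; apply: eq_bigr => t _; apply: step.
rewrite (eq_bigr (fun x => \sum_(t : k.-tuple 'I_n) (\sum_(i < n) (count_mem i t).+1 ^ 2) + 2 * \sum_(t : k.-tuple 'I_n) count_mem x t + 3 * n ^ k))%N; last first.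
  move=> x _; rewrite 2!big_split -big_distrr sum_nat_const card_tuple card_ord.
  by rewrite mulnC.
rewrite 2!big_split -big_distrr.
rewrite [\sum_(x < n) \sum_(t : k.-tuple 'I_n) count_mem x t]exchange_big.
rewrite [\sum_(t : k.-tuple 'I_n) \sum_(x < n) count_mem x t](eq_bigr (fun _ => k)); last first.
  by move=> t _; rewrite sum_count size_tuple.
rewrite !sum_nat_const !card_ord card_tuple card_ord expnS.
move: IH; set H := \sum_(t : k.-tuple 'I_n) _; set P := n ^ k => IH.
have e : (n * (n * H) = n * (P * (n * (n + 3 * k) + k * (k - 1))))%N by rewrite IH.
clearbody H P; rewrite subn1 /=.
clear step; case: k IH e => [|k] IH e; nia.
Qed.
Lemma trees1 : labeled_trees 1 = [set set0].
Proof.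
apply/setP => E; rewrite !inE; apply/idP/eqP => [/and3P[hs _ _]|->].
  apply/setP => e; rewrite inE; apply/negbTE/negP => eE.
  move/forallP: hs => /(_ e); rewrite eE /= => /eqP h.
  by have := max_card (mem e); rewrite card_ord h.
apply/tree_top; split.
- by move=> e; rewrite inE.
- by move=> x y _ _; rewrite (ord1 x) (ord1 y) connect0.
- by apply: (@noCyc_small _ setT) => [e|]; rewrite ?inE ?cardsT ?card_ord.
Qed.
Local Open Scope ring_scope.

Lemma exp_main k : expected_E0C k.+2 =
  (k.+2)%:R * (k.+1)%:R / 6%:R - ((k.+2) * (k.+2 + 3 * k) + k * (k - 1))%N%:R / (6%:R * (k.+2)%:R).
Proof.
set n := k.+2.
have cT : #|[set: 'I_n]| = k.+2 by rewrite cardsT card_ord.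
have allT : forall s : seq 'I_n, all (mem [set: 'I_n]) s by move=> s; apply/allP => x _; rewrite inE.
have eL : labeled_trees n = [set decode [set: 'I_n] (tval t) | t in {: k.-tuple 'I_n}].
  apply/setP => E; rewrite inE; apply/idP/imsetP => [/tree_top ht|[t _ ->]].
    have [s [sz _ ->]] := decodeC cT ht.
    by exists (@Tuple k _ s (introT eqP sz)).
  by apply/tree_top; case: (decodeA cT (size_tuple t) (allT t)).
have inj : {in {: k.-tuple 'I_n} &, injective (fun t : k.-tuple 'I_n => decode [set: 'I_n] (tval t))}.
  move=> t1 t2 _ _ e; apply: val_inj.
  exact: (decodeB cT (size_tuple t1) (size_tuple t2) (allT t1) (allT t2) e).
rewrite /expected_E0C eL big_imset // card_in_imset // card_tuple card_ord.
have hE : forall t : k.-tuple 'I_n, E0C (decode [set: 'I_n] (tval t)) =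
    n%:R / 6%:R * (n%:R - 1) - (\sum_(i < n) ((count_mem i t).+1 ^ 2)%N%:R) / 6%:R.
  move=> t; rewrite /E0C /mean_sq_degree.
  have [_ hd] := decodeA cT (size_tuple t) (allT t).
  rewrite (eq_bigr (fun i : 'I_n => ((count_mem i t).+1 ^ 2)%N%:R)); last first.
    by move=> i _; rewrite hd ?inE.
  have n0 : n%:R != 0 :> rat by rewrite pnatr_eq0.
  by field.
rewrite (eq_bigr _ (fun t _ => hE t)) sumrB sumr_const -mulr_suml.
set D := \sum_(i in _) _.
have -> : D = (\sum_(t : k.-tuple 'I_n) \sum_(i < n) (count_mem i t).+1 ^ 2)%N%:R.
  by rewrite natr_sum; apply: eq_big => // t _; rewrite natr_sum.
rewrite card_tuple card_ord.
have := sumsq k n; rewrite -/n => hs.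
have n0 : n%:R != 0 :> rat by rewrite pnatr_eq0.
have P0 : (n ^ k)%:R != 0 :> rat by rewrite pnatr_eq0 expn_eq0.
have hs' : (\sum_(t : k.-tuple 'I_n) \sum_(i < n) (count_mem i t).+1 ^ 2)%N%:R =
    (n ^ k)%:R * (n * (n + 3 * k) + k * (k - 1))%N%:R / n%:R :> rat.
  by rewrite -natrM -hs natrM; field.
rewrite hs' -mulr_natr.
have e1 : k.+1%:R = n%:R - 1 :> rat by rewrite /n -[k.+2]addn1 natrD addrK.
by rewrite e1; field; rewrite n0 P0.
Qed.
Unset Implicit Arguments.
Theorem proposition1 (n : nat) (hn : (1 <= n)%N) :
  expected_E0C n = 6%:R^-1 * (n%:R - 1) * (n%:R - 5%:R + 6%:R / n%:R) /\
  expected_E0C n = n%:R ^+ 2 / 6%:R - n%:R + 11%:R / 6%:R - n%:R^-1.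
Proof.
case: n hn => [//|[|k]] _.
  have h0 : E0C (set0 : {set {set 'I_1}}) = 0.
    rewrite /E0C /mean_sq_degree big1 ?mul0r ?subr0 ?subrr ?mulr0 // => i _.
    by rewrite /degree (_ : [set e in set0 | _] = set0) ?cards0 //; apply/setP => e; rewrite !inE.
  rewrite /expected_E0C trees1 big_set1 cards1 h0 mul0r.
  by split; rewrite subrr ?mulr0 ?mul0r //; rewrite expr1n; field.
rewrite exp_main.
have -> : ((k.+2) * (k.+2 + 3 * k) + k * (k - 1))%N = (5 * k ^ 2 + 9 * k + 4)%N.
  by case: k => [|k] //; rewrite subn1 /=; nia.
have e2 : k.+2%:R = k%:R + 2%:R :> rat by rewrite -natrD addn2.
have e1 : k.+1%:R = k%:R + 1 :> rat by rewrite -addn1 natrD.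
rewrite e2 e1 !natrD !natrM ?natrX.
have k0 : k%:R + 2%:R != 0 :> rat by rewrite -natrD pnatr_eq0 addn2.
by split; field; rewrite k0.
Qed.
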